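(* Let $m\ge 3$ and let $K\ne\Delta_{[m]}$ be a simplicial complex on $[m]$ such that $f_0(K)<m$ or $f_0(K^\vee)<m$. Then $\chi(\mathrm{Bier}(K))=m-1$ if and only if, after a permutation of $[m]$, $K$ equals one of the following complexes on $[m]$: $\Delta_{[m-1]}$; $\Delta_{[m-2]}$; $\Delta_{[m-1]}\cup\Delta_{[m-2]\cup\{m\}}$ (here $\Delta_I=2^I$). Moreover, in each of these cases $\mathrm{Bier}(K)$ is isomorphic to the $(m-3)$-fold iterated suspension $\Sigma^{m-3}(Z_4)$ of the 4-cycle, i.e. to the boundary complex of the $(m-1)$-dimensional cross-polytope.
   Context: A simplicial complex $K$ on $[m]=\{1,\dots,m\}$ is a nonempty family of subsets of $[m]$ closed under taking subsets; $V(K)=\{i:\{i\}\in K\}$ and $f_0(K)=|V(K)|$ (elements of $[m]\setminus V(K)$ are ghost vertices). Let $[m']=\{1',\dots,m'\}$ be a disjoint copy of $[m]$, $I'=\{i':i\in I\}$. For $K\ne 2^{[m]}$ the Alexander dual $K^\vee$ is the complex on $[m']$ with $J'\in K^\vee$ iff $[m]\setminus J\notin K$. The Bier sphere $\mathrm{Bier}(K)$ is the complex on $[m]\sqcup[m']$ with faces $I\sqcup J'$, $I\in K$, $J'\in K^\vee$, $I\cap J=\varnothing$. The chromatic number $\chi(L)$ is the least number of colors in a map $c\colon V(L)\to C$ with $c(u)\ne c(v)$ whenever $\{u,v\}\in L$. $Z_4$ is the 4-cycle graph; the suspension of $L$ is $\{\varnothing,\{v\},\{w\}\}*L$ for two new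 vertices $v,w$, where $*$ is the join. *)

(* Defs.v *)
From HB Require Import structures.
From mathcomp Require Import all_boot fingroup perm.
Set Implicit Arguments. Unset Strict Implicit. Unset Printing Implicit Defensive.

(* A simplicial complex on a finite vertex type T is represented by its set of
   faces, a family of subsets of T. Elements of T not in V(L) are ghost vertices. *)
Definition is_complex (T : finType) (L : {set {set T}}) : Prop :=
  L != set0 /\ forall F G : {set T}, F \in L -> G \subset F -> G \in L.

Definition verts (T : finType) (L : {set {set T}}) : {set T} :=
  [set v | [set v] \in L].

Definition f0 (T : finType) (L : {set {set T}}) : nat := #|verts L|.

Definition simplex (T : finType) (I : {set T}) : {set {set T}} := powerset I.

(* Alexander dual, realised on a copy of [m] (here the same type 'I_m, the
   primes being implicit): J' in K^vee iff [m] \ J notin K. *)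
Definition alex_dual (m : nat) (K : {set {set 'I_m}}) : {set {set 'I_m}} :=
  [set J | ~: J \notin K].

(* Bier sphere on [m] ⊔ [m'] = 'I_m + 'I_m (inl i = i, inr i = i'). *)
Definition bier (m : nat) (K : {set {set 'I_m}}) : {set {set ('I_m + 'I_m)}} :=
  [set F : {set ('I_m + 'I_m)} |
     let I := [set i | inl i \in F] in
     let J := [set j | inr j \in F] in
     [&& I \in K, J \in alex_dual K & [disjoint I & J]]].

Definition colorable (T : finType) (L : {set {set T}}) (k : nat) : Prop :=
  exists c : T -> nat,
    (forall v, v \in verts L -> c v < k) /\
    (forall u v, [set u; v] \in L -> u != v -> c u != c v).

Definition chromatic_number (T : finType) (L : {set {set T}}) (k : nat) : Prop :=
  colorable L k /\ forall k', colorable L k' -> k <= k'.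

Definition Z4 : {set {set 'I_4}} :=
  [set F : {set 'I_4} | (#|F| <= 1) ||
     (F \in [:: [set inord 0; inord 1]; [set inord 1; inord 2];
               [set inord 2; inord 3]; [set inord 3; inord 0]])].

Definition susp (T : finType) (L : {set {set T}}) : {set {set (T + bool)}} :=
  [set G : {set (T + bool)} |
     ([set x | inl x \in G] \in L) && (#|[set b | inr b \in G]| <= 1)].

Fixpoint susp_type (n : nat) : finType :=
  match n with 0 => 'I_4 | n'.+1 => (susp_type n' + bool)%type end.

Fixpoint iter_susp_Z4 (n : nat) : {set {set (susp_type n)}} :=
  match n return {set {set (susp_type n)}} with
  | 0 => Z4
  | n'.+1 => susp (iter_susp_Z4 n')
  end.

(* isomorphism of simplicial complexes (ghost vertices ignored) *)
Definition sc_iso (T1 T2 : finType) (L1 : {set {set T1}}) (L2 : {set {set T2}}) : Prop :=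
  exists f : T1 -> T2,
    {in verts L1 &, injective f} /\ f @: verts L1 = verts L2 /\
    (forall F : {set T1}, F \subset verts L1 -> (F \in L1 <-> f @: F \in L2)).

Definition relabel (m : nat) (s : {perm 'I_m}) (K : {set {set 'I_m}}) : {set {set 'I_m}} :=
  [set (s : 'I_m -> 'I_m) @: F | F : {set 'I_m} in K].

(* [k] = {1,...,k} as a subset of [m] (0-based: values < k) *)
Definition first (m k : nat) : {set 'I_m} := [set i : 'I_m | i < k].

(* Main.v *)
Require Import Defs.
From mathcomp Require Import all_boot fingroup perm zify.
Set Implicit Arguments. Unset Strict Implicit. Unset Printing Implicit Defensive.


Definition cross (T P : finType) (L : {set {set T}}) (e : T -> P * bool) (g : P * bool -> T) :=
  [/\ forall F : {set T}, F \in L -> F \subset verts L,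
      forall q, g q \in verts L,
      forall x, x \in verts L -> g (e x) = x,
      forall q, e (g q) = q &
      forall F : {set T}, F \subset verts L ->
        (F \in L <-> forall p, ~~ ((g (p, false) \in F) && (g (p, true) \in F)))].

Lemma in_verts (T : finType) (L : {set {set T}}) v : (v \in verts L) = ([set v] \in L).
Proof. by rewrite inE. Qed.

Lemma clique_bound (T : finType) (L : {set {set T}}) (C : {set T}) k :
  (forall u v, u \in C -> v \in C -> [set u; v] \in L) ->
  colorable L k -> #|C| <= k.
Proof.
move=> HC [c [Hc1 Hc2]].
have Hv : forall u, u \in C -> u \in verts L.
  by move=> u uC; rewrite in_verts -[[set u]]setUid HC.
have inj : {in C &, injective c}.
  move=> u v uC vC cuv; apply/eqP; apply/negPn/negP => uv.
  by move: (Hc2 u v (HC u v uC vC) uv); rewrite cuv eqxx.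
have := @uniq_leq_size _ (map c (enum C)) (iota 0 k).
rewrite size_map size_iota -cardE; apply.
  by rewrite map_inj_in_uniq ?enum_uniq // => u v; rewrite !mem_enum; apply: inj.
move=> x /mapP [u]; rewrite mem_enum => uC ->.
by rewrite mem_iota add0n Hc1 // Hv.
Qed.

Lemma cross_chrom (T P : finType) (L : {set {set T}}) (e : T -> P * bool) (g : P * bool -> T) :
  cross L e g -> chromatic_number L #|P|.
Proof.
case=> Hf Hg Hge Heg HF; split.
  exists (fun x => nat_of_ord (enum_rank (e x).1)); split=> [v _|u v Huv uv].
    exact: ltn_ord.
  apply/negP => /eqP /val_inj /enum_rank_inj E.
  have Hsub := Hf _ Huv.
  have uV : u \in verts L by apply: (subsetP Hsub); rewrite !inE eqxx.
  have vV : v \in verts L by apply: (subsetP Hsub); rewrite !inE eqxx orbT.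
  have := (HF _ Hsub).1 Huv (e u).1.
  have neq : (e u).2 != (e v).2.
    apply/negP => /eqP E2; move/negP: uv; apply.
    by rewrite -(Hge u uV) -(Hge v vV); rewrite [e u]surjective_pairing [e v]surjective_pairing E E2.
  have gu : g ((e u).1, (e u).2) = u by rewrite -surjective_pairing Hge.
  have gv : g ((e u).1, (e v).2) = v by rewrite E -surjective_pairing Hge.
  by move: neq gu gv; case: (e u).2; case: (e v).2 => //= _ -> ->; rewrite !inE !eqxx ?orbT.
move=> k' Hk'.
pose C := [set g (p, false) | p in P].
have <- : #|C| = #|P|.
  rewrite card_imset // => p1 p2 E.
  by have := congr1 e E; rewrite !Heg => -[].
apply: clique_bound Hk' => u v /imsetP [p1 _ ->] /imsetP [p2 _ ->].
have Hs : [set g (p1, false); g (p2, false)] \subset verts L.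
  by apply/subsetP => x /set2P [] ->; apply: Hg.
apply/(HF _ Hs) => p; rewrite !inE; apply/negP => /andP [_ /orP H].
by case: H => /eqP /(congr1 e); rewrite !Heg.
Qed.

Lemma cross_iso (T1 T2 P1 P2 : finType) (L1 : {set {set T1}}) (L2 : {set {set T2}})
  (e1 : T1 -> P1 * bool) (g1 : P1 * bool -> T1)
  (e2 : T2 -> P2 * bool) (g2 : P2 * bool -> T2) (h : P1 -> P2) (hi : P2 -> P1) :
  cross L1 e1 g1 -> cross L2 e2 g2 -> cancel h hi -> cancel hi h ->
  sc_iso L1 L2.
Proof.
case=> Hf1 Hg1 Hge1 Heg1 HF1 [Hf2 Hg2 Hge2 Heg2 HF2] hK hiK.
pose h' := fun q : P1 * bool => (h q.1, q.2).
pose hi' := fun q : P2 * bool => (hi q.1, q.2).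
have h'K : cancel h' hi' by case=> p s; rewrite /h' /hi' /= hK.
have hi'K : cancel hi' h' by case=> p s; rewrite /h' /hi' /= hiK.
exists (fun x => g2 (h' (e1 x))); split.
- move=> x y xV yV /(congr1 e2); rewrite !Heg2 => /(can_inj h'K) E.
  by rewrite -(Hge1 x xV) -(Hge1 y yV) E.
split.
  apply/setP => y; apply/imsetP/idP => [[x _ ->] // | yV].
  exists (g1 (hi' (e2 y))); first exact: Hg1.
  by rewrite Heg1 hi'K Hge2.
move=> F FV.
have Himg : forall q, (g2 q \in [set g2 (h' (e1 x)) | x in F]) = (g1 (hi' q) \in F).
  move=> q; apply/imsetP/idP => [[x xF /(congr1 e2)] | H].
    by rewrite !Heg2 => ->; rewrite h'K Hge1 // (subsetP FV).
  by exists (g1 (hi' q)) => //; rewrite Heg1 hi'K.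
have FV2 : [set g2 (h' (e1 x)) | x in F] \subset verts L2.
  by apply/subsetP => y /imsetP [x _ ->]; apply: Hg2.
split=> [/(HF1 _ FV) H | H]; [apply/(HF2 _ FV2) => p | apply/(HF1 _ FV) => p; move/(HF2 _ FV2): H => H].
  by rewrite !Himg /hi' /=; apply: H.
by have := H (h p); rewrite !Himg /hi' /= hK.
Qed.

Lemma card_bij (A B : finType) : #|A| = #|B| ->
  exists (h : A -> B) (hi : B -> A), cancel h hi /\ cancel hi h.
Proof.
move=> E.
exists (fun a => enum_val (cast_ord E (enum_rank a))).
exists (fun b => enum_val (cast_ord (esym E) (enum_rank b))).
split=> x; rewrite enum_valK; set i := cast_ord _ _;
  have -> : i = enum_rank x by apply: val_inj.
  all: exact: enum_rankK.
Qed.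

Lemma all4 (j : 'I_4) : [\/ j = inord 0, j = inord 1, j = inord 2 | j = inord 3].
Proof.
case: j => [[|[|[|[|j]]]] Hj] //.
- by constructor 1; apply/val_inj; rewrite /= inordK.
- by constructor 2; apply/val_inj; rewrite /= inordK.
- by constructor 3; apply/val_inj; rewrite /= inordK.
- by constructor 4; apply/val_inj; rewrite /= inordK.
Qed.

Lemma inordE4 a b : a < 4 -> b < 4 -> (inord a == inord b :> 'I_4) = (a == b).
Proof. by move=> Ha Hb; rewrite -val_eqE /= !inordK. Qed.

Lemma Z4P (F : {set 'I_4}) :
  (F \in Z4) = ~~ ((inord 0 \in F) && (inord 2 \in F)) && ~~ ((inord 1 \in F) && (inord 3 \in F)).
Proof.
rewrite inE.
case E0: (inord 0 \in F); case E1: (inord 1 \in F);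
case E2: (inord 2 \in F); case E3: (inord 3 \in F) => /=;
(try (apply/negbTE; rewrite negb_or; apply/andP; split;
  [ apply/negP => /card_le1_eqP H;
    first [ have := H _ _ E0 E2 | have := H _ _ E1 E3 ];
    by move/eqP; rewrite inordE4
  | rewrite !inE; apply/negP => /or4P [] /eqP FE;
    by move: E0 E1 E2 E3; rewrite FE !inE !inordE4 ]));
(try (apply/orP; left; apply/card_le1_eqP => x y xF yF;
  case: (all4 x) xF => -> xF; case: (all4 y) yF => -> yF //;
  by rewrite ?E0 ?E1 ?E2 ?E3 in xF yF));
apply/orP; right; rewrite !inE; apply/or4P;
first [ constructor 1; apply/eqP; apply/setP => j; rewrite !inE; case: (all4 j) => ->; by rewrite ?E0 ?E1 ?E2 ?E3 !inordE4 | constructor 2; apply/eqP; apply/setP => j; rewrite !inE; case: (all4 j) => ->; by rewrite ?E0 ?E1 ?E2 ?E3 !inordE4 | constructor 3; apply/eqP; apply/setP => j; rewrite !inE; case: (all4 j) => ->; by rewrite ?E0 ?E1 ?E2 ?E3 !inordE4 | constructor 4; apply/eqP; apply/setP => j; rewrite !inE; case: (all4 j) => ->; by rewrite ?E0 ?E1 ?E2 ?E3 !inordE4 ].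
Qed.

Definition fullcross (T P : finType) (L : {set {set T}}) (e : T -> P * bool) (g : P * bool -> T) :=
  [/\ cancel e g, cancel g e &
      forall F : {set T}, F \in L <-> forall p, ~~ ((g (p, false) \in F) && (g (p, true) \in F))].

Lemma fullcross_cross (T P : finType) (L : {set {set T}}) (e : T -> P * bool) (g : P * bool -> T) :
  fullcross L e g -> cross L e g.
Proof.
case=> eK gK HF.
have HV : verts L = setT.
  apply/setP => v; rewrite in_verts inE; apply/HF => p; rewrite !inE.
  apply/negP => /andP [/eqP E1 /eqP E2].
  by have := congr1 e (etrans E1 (esym E2)); rewrite !gK.
split; rewrite ?HV.
- by move=> F _; apply: subsetT.
- by move=> q; rewrite inE.
- by move=> x _; rewrite eK.
- exact: gK.
- by move=> F _; apply: HF.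
Qed.

Fixpoint cidx (k : nat) : finType :=
  match k with 0 => bool | k'.+1 => option (cidx k') end.

Lemma card_cidx k : #|cidx k| = k.+2.
Proof. by elim: k => [|k IH] /=; rewrite ?card_bool ?card_option ?IH. Qed.

Lemma card_bool_le1 (P : pred bool) : (#|[set b | P b]| <= 1) = ~~ (P false && P true).
Proof.
case Pf: (P false); case Pt: (P true) => /=.
- have -> : [set b | P b] = setT by apply/setP => -[]; rewrite !inE.
  by rewrite cardsT card_bool.
- have -> : [set b | P b] = [set false] by apply/setP => -[]; rewrite !inE.
  by rewrite cards1.
- have -> : [set b | P b] = [set true] by apply/setP => -[]; rewrite !inE.
  by rewrite cards1.
- have -> : [set b | P b] = set0 by apply/setP => -[]; rewrite !inE.
  by rewrite cards0.
Qed.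

Lemma iter_cross k : exists (e : susp_type k -> cidx k * bool) (g : cidx k * bool -> susp_type k),
  fullcross (iter_susp_Z4 k) e g.
Proof.
elim: k => [|k [e [g [eK gK HF]]]].
  exists (fun i : 'I_4 => (odd i, 1 < i)), (fun q : bool * bool => (inord (q.1 + 2 * q.2) : 'I_4)).
  split.
  - move=> i; case: (all4 i) => ->; apply/val_inj => /=; rewrite !(@inordK 3) //=.
  - by case=> p s; case: p; case: s; rewrite /= (@inordK 3).
  - move=> F /=; rewrite Z4P; split => [/andP [H1 H2] [] | H]; [exact: H2 | exact: H1 |].
    by apply/andP; split; [exact: (H false) | exact: (H true)].
exists (fun x : susp_type k.+1 => match x with
          | inl y => (Some (e y).1, (e y).2) | inr b => (None, b) end).
exists (fun q : cidx k.+1 * bool => match q with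
          | (Some p, s) => inl (g (p, s)) | (None, s) => inr s end).
split.
- by case=> [y|b] //=; rewrite -surjective_pairing eK.
- by case=> [[p|] s] //=; rewrite gK.
- move=> F; rewrite /= inE card_bool_le1; split.
    move=> /andP [/HF H1 H2] [p|].
      by have := H1 p; rewrite !inE.
    exact: H2.
  move=> H; apply/andP; split; last exact: (H None).
  by apply/HF => p; rewrite !inE; exact: (H (Some p)).
Qed.

Lemma disjE (T : finType) (A B : {set T}) :
  [disjoint A & B] <-> forall x, ~~ ((x \in A) && (x \in B)).
Proof.
rewrite disjoints_subset; split => [/subsetP H x | H].
  by apply/negP => /andP [/H]; rewrite inE => /negP.
by apply/subsetP => x xA; rewrite inE; apply/negP => xB; move: (H x); rewrite xA xB.
Qed.

Lemma dual_dual m (K : {set {set 'I_m}}) : alex_dual (alex_dual K) = K.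
Proof. by apply/setP => J; rewrite !inE setCK negbK. Qed.

Lemma in_dual m (K : {set {set 'I_m}}) J : (J \in alex_dual K) = (~: J \notin K).
Proof. by rewrite inE. Qed.

Definition swap m (x : 'I_m + 'I_m) : 'I_m + 'I_m :=
  match x with inl i => inr i | inr i => inl i end.

Lemma swapK m : involutive (@swap m). Proof. by case. Qed.

Lemma swap_eq m (x u : 'I_m + 'I_m) : (swap x == u) = (x == swap u).
Proof. by case: x; case: u. Qed.

Definition swp m (F : {set 'I_m + 'I_m}) := [set x | swap x \in F].

Lemma swp1 m (v : 'I_m + 'I_m) : swp [set v] = [set swap v].
Proof.
apply/setP => x; rewrite !inE; apply/eqP/eqP => [<-|->]; by rewrite swapK.
Qed.

Lemma bier_dualE m (K : {set {set 'I_m}}) F :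
  (F \in bier (alex_dual K)) = (swp F \in bier K).
Proof.
rewrite !inE.
have -> : [set i | inl i \in swp F] = [set i | inr i \in F] by apply/setP => i; rewrite !inE.
have -> : [set i | inr i \in swp F] = [set i | inl i \in F] by apply/setP => i; rewrite !inE.
by rewrite dual_dual; cbv zeta; rewrite disjoint_sym andbCA.
Qed.

Lemma verts_dual m (K : {set {set 'I_m}}) v :
  (v \in verts (bier (alex_dual K))) = (swap v \in verts (bier K)).
Proof. by rewrite !in_verts bier_dualE swp1. Qed.

Lemma cross_dual m (P : finType) (K : {set {set 'I_m}}) e (g : P * bool -> 'I_m + 'I_m) :
  cross (bier K) e g -> cross (bier (alex_dual K)) (fun x => e (swap x)) (fun q => swap (g q)).
Proof.
case=> Hf Hg Hge Heg HF; split.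
- move=> F; rewrite bier_dualE => /Hf /subsetP H; apply/subsetP => v vF.
  by rewrite verts_dual; apply: H; rewrite [_ \in swp F]inE swapK.
- by move=> q; rewrite verts_dual swapK.
- by move=> x; rewrite verts_dual => /Hge ->; rewrite swapK.
- by move=> q; rewrite swapK.
- move=> F FV.
  have FV' : swp F \subset verts (bier K).
    apply/subsetP => v; rewrite [v \in swp F]inE => /(subsetP FV).
    by rewrite verts_dual swapK.
  rewrite bier_dualE; split.
    by move/(HF _ FV') => H p; have := H p; rewrite !inE.
  by move=> H; apply/(HF _ FV') => p; rewrite !inE; apply: H.
Qed.

Lemma colorable_dual m (K : {set {set 'I_m}}) k :
  colorable (bier K) k -> colorable (bier (alex_dual K)) k.
Proof.
case=> c [H1 H2]; exists (fun x => c (swap x)); split.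
  by move=> v; rewrite verts_dual; apply: H1.
move=> u v; rewrite bier_dualE => H uv; apply: H2.
  suff -> : [set swap u; swap v] = swp [set u; v] by [].
  by apply/setP => x; rewrite [x \in swp _]inE !inE !swap_eq.
by apply: contra uv => /eqP /(can_inj (@swapK m)) ->.
Qed.

Definition S1 m (a : 'I_m) : {set {set 'I_m}} := simplex (~: [set a]).
Definition S2 m (a b : 'I_m) : {set {set 'I_m}} := simplex (~: [set a; b]).
Definition S3 m (a b : 'I_m) : {set {set 'I_m}} := S1 a :|: S1 b.

Lemma inS1 m (a : 'I_m) J : (J \in S1 a) = (a \notin J).
Proof. by rewrite /S1 /simplex powersetE subsetC sub1set inE. Qed.

Lemma inS2 m (a b : 'I_m) J : (J \in S2 a b) = (a \notin J) && (b \notin J).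
Proof. by rewrite /S2 /simplex powersetE subsetC subUset !sub1set !inE. Qed.

Lemma inS3 m (a b : 'I_m) J : (J \in S3 a b) = (a \notin J) || (b \notin J).
Proof. by rewrite /S3 inE !inS1. Qed.

Lemma dual_S1 m (a : 'I_m) : alex_dual (S1 a) = S1 a.
Proof. by apply/setP => J; rewrite in_dual !inS1 inE negbK. Qed.

Lemma dual_S2 m (a b : 'I_m) : alex_dual (S2 a b) = S3 a b.
Proof. by apply/setP => J; rewrite in_dual inS2 inS3 !inE !negbK negb_and. Qed.

Lemma disj0r (T : finType) (A : {set T}) : [disjoint A & set0].
Proof. by apply/disjE => x; rewrite inE andbF. Qed.

Lemma disj0l (T : finType) (A : {set T}) : [disjoint set0 & A].
Proof. by apply/disjE => x; rewrite inE. Qed.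

Lemma vl m (K : {set {set 'I_m}}) i :
  (inl i \in verts (bier K)) = ([set i] \in K) && (set0 \in alex_dual K).
Proof.
rewrite in_verts inE.
have -> : [set x | inl x \in [set (inl i : 'I_m + 'I_m)]] = [set i].
  by apply/setP => x; rewrite !inE.
have -> : [set x | inr x \in [set (inl i : 'I_m + 'I_m)]] = set0.
  by apply/setP => x; rewrite !inE.
by cbv zeta; rewrite disj0r andbT.
Qed.

Lemma vr m (K : {set {set 'I_m}}) j :
  (inr j \in verts (bier K)) = (set0 \in K) && ([set j] \in alex_dual K).
Proof.
rewrite in_verts inE.
have -> : [set x | inl x \in [set (inr j : 'I_m + 'I_m)]] = set0.
  by apply/setP => x; rewrite !inE.
have -> : [set x | inr x \in [set (inr j : 'I_m + 'I_m)]] = [set j].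
  by apply/setP => x; rewrite !inE.
by cbv zeta; rewrite disj0l andbT.
Qed.

Lemma bier_closed m (K : {set {set 'I_m}}) :
  (forall F G : {set 'I_m}, F \in K -> G \subset F -> G \in K) ->
  forall F G : {set 'I_m + 'I_m}, F \in bier K -> G \subset F -> G \in bier K.
Proof.
move=> HK F G; rewrite !inE; cbv zeta => /and3P [HI HJ HD] /subsetP GF.
have sI : [set i | inl i \in G] \subset [set i | inl i \in F].
  by apply/subsetP => i; rewrite !inE => /GF.
have sJ : [set i | inr i \in G] \subset [set i | inr i \in F].
  by apply/subsetP => i; rewrite !inE => /GF.
apply/and3P; split.
- exact: HK HI sI.
- move: HJ; rewrite !in_dual; apply: contra => H; apply: HK H _.
  by rewrite setCS.
- move/disjE: HD => HD; apply/disjE => x; apply: contra (HD x) => /andP [xI xJ].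
  by rewrite (subsetP sI _ xI) (subsetP sJ _ xJ).
Qed.

Lemma closed_verts (T : finType) (L : {set {set T}}) :
  (forall F G : {set T}, F \in L -> G \subset F -> G \in L) ->
  forall F, F \in L -> F \subset verts L.
Proof.
move=> HL F FL; apply/subsetP => v vF; rewrite in_verts; apply: HL FL _.
by rewrite sub1set.
Qed.

Lemma simplex_closed m (A : {set 'I_m}) (F G : {set 'I_m}) : F \in simplex A -> G \subset F -> G \in simplex A.
Proof. by rewrite /simplex !powersetE => H1 H2; apply: subset_trans H2 H1. Qed.

Definition ua k (a i : 'I_k.+3) : 'I_k.+2 := odflt ord0 (unlift a i).

Lemma ua_lift k (a : 'I_k.+3) p : ua a (lift a p) = p.
Proof. by rewrite /ua liftK. Qed.

Lemma lift_ua k (a i : 'I_k.+3) : i != a -> lift a (ua a i) = i.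
Proof.
move=> ia; rewrite eq_sym in ia; case: (unlift_some ia) => j -> E.
by rewrite /ua E.
Qed.

Definition e1 k (a : 'I_k.+3) (x : 'I_k.+3 + 'I_k.+3) : 'I_k.+2 * bool :=
  match x with inl i => (ua a i, false) | inr i => (ua a i, true) end.
Definition g1 k (a : 'I_k.+3) (q : 'I_k.+2 * bool) : 'I_k.+3 + 'I_k.+3 :=
  if q.2 then inr (lift a q.1) else inl (lift a q.1).

Lemma vS1 k (a : 'I_k.+3) v :
  (v \in verts (bier (S1 a))) = (match v with inl i => i | inr i => i end != a).
Proof.
case: v => i; by rewrite ?vl ?vr dual_S1 !inS1 !inE ?andbT //= eq_sym.
Qed.

Lemma cross_S1 k (a : 'I_k.+3) : cross (bier (S1 a)) (e1 a) (g1 a).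
Proof.
have cl := bier_closed (@simplex_closed _ (~: [set a])).
split.
- exact: closed_verts cl.
- by case=> p [] /=; rewrite vS1 eq_sym neq_lift.
- by case=> i; rewrite vS1 => ia; rewrite /g1 /= lift_ua.
- by case=> p [] ; rewrite /g1 /e1 /= ua_lift.
move=> F /subsetP FV.
have nl : inl a \notin F by apply/negP => /FV; rewrite vS1 eqxx.
have nr : inr a \notin F by apply/negP => /FV; rewrite vS1 eqxx.
rewrite inE; cbv zeta; rewrite dual_S1 !inS1 !inE (negbTE nl) (negbTE nr) /=.
split => [/disjE H p | H].
  by have := H (lift a p); rewrite !inE.
apply/disjE => i; rewrite !inE.
case: (eqVneq i a) => [->|ia]; first by rewrite (negbTE nl).
by have := H (ua a i); rewrite /g1 /= lift_ua.
Qed.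

Definition e2 k (a b : 'I_k.+3) (x : 'I_k.+3 + 'I_k.+3) : 'I_k.+2 * bool :=
  match x with
  | inl i => (ua a i, false)
  | inr i => if i == a then (ua a b, false) else (ua a i, true) end.
Definition g2 k (a b : 'I_k.+3) (q : 'I_k.+2 * bool) : 'I_k.+3 + 'I_k.+3 :=
  if q.2 then inr (lift a q.1)
  else if lift a q.1 == b then inr a else inl (lift a q.1).

Lemma vS2 k (a b : 'I_k.+3) v : a != b ->
  (v \in verts (bier (S2 a b))) = (match v with inl i => (i != a) && (i != b) | inr _ => true end).
Proof.
move=> ab; case: v => i; rewrite ?vl ?vr dual_S2 ?inS2 ?inS3 !inE ?andbT //=.
  by rewrite ![_ == i]eq_sym.
by case: (eqVneq a i) => [<-|] //; rewrite eq_sym ab.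
Qed.

Lemma cross_S2 k (a b : 'I_k.+3) : a != b -> cross (bier (S2 a b)) (e2 a b) (g2 a b).
Proof.
move=> ab.
have ba : b != a by rewrite eq_sym.
have cl := bier_closed (@simplex_closed _ (~: [set a; b])).
split.
- exact: closed_verts cl.
- case=> p [] /=; rewrite /g2 /= (vS2 _ ab) //.
  by case: ifP => // /negbT ->; rewrite eq_sym neq_lift.
- case=> i; rewrite (vS2 _ ab) /=.
    by case/andP => ia ib; rewrite /g2 /= lift_ua // (negbTE ib).
  by case: (eqVneq i a) => [->|ia] _ /=; rewrite /g2 /= lift_ua ?eqxx.
- case=> p [] /=; rewrite /g2 /=.
    have -> : (lift a p == a) = false by rewrite eq_sym (negbTE (neq_lift a p)).
    by rewrite ua_lift.
  case: eqP => [<-|_] /=; first by rewrite eqxx ua_lift.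
  by rewrite ua_lift.
move=> F /subsetP FV.
have nla : inl a \notin F by apply/negP => /FV; rewrite vS2 // eqxx.
have nlb : inl b \notin F by apply/negP => /FV; rewrite vS2 // eqxx andbF.
rewrite inE; cbv zeta; rewrite dual_S2 inS2 inS3 !inE (negbTE nla) (negbTE nlb) /=.
split => [/andP [Hab /disjE H] p | H].
  rewrite /g2 /=; case: eqP => [E|_].
    by rewrite E negb_and.
  by have := H (lift a p); rewrite !inE.
apply/andP; split.
  by have := H (ua a b); rewrite /g2 /= lift_ua // eqxx negb_and.
apply/disjE => i; rewrite !inE.
case: (eqVneq i a) => [->|ia]; first by rewrite (negbTE nla).
case: (eqVneq i b) => [->|ib]; first by rewrite (negbTE nlb).
by have := H (ua a i); rewrite /g2 /= lift_ua // (negbTE ib).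
Qed.

Lemma cross_S3 k (a b : 'I_k.+3) : a != b ->
  cross (bier (S3 a b)) (fun x => e2 a b (swap x)) (fun q => swap (g2 a b q)).
Proof. by move=> ab; rewrite -dual_S2; apply: cross_dual; apply: cross_S2. Qed.

Lemma surj_col (A : finType) (f : A -> nat) (S : {set A}) n :
  {in S &, injective f} -> #|S| = n -> (forall x, x \in S -> f x < n) ->
  forall v, v < n -> exists2 x, x \in S & f x = v.
Proof.
move=> inj cS lt v vn.
have U : uniq (map f (enum S)).
  by rewrite map_inj_in_uniq ?enum_uniq // => x y; rewrite !mem_enum; apply: inj.
have Sb : {subset map f (enum S) <= iota 0 n}.
  by move=> y /mapP [x]; rewrite mem_enum => xS ->; rewrite mem_iota add0n lt.
have Sz : size (iota 0 n) <= size (map f (enum S)).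
  by rewrite size_map size_iota -cardE cS.
have [_ E] := uniq_min_size U Sb Sz.
have : v \in map f (enum S) by rewrite E mem_iota add0n.
by case/mapP => x; rewrite mem_enum => xS ->; exists x.
Qed.

Lemma bier_rr m (K : {set {set 'I_m}}) i j :
  ([set inr i; inr j] \in bier K) = (set0 \in K) && ([set i; j] \in alex_dual K).
Proof.
rewrite inE.
have -> : [set x | inl x \in [set (inr i : 'I_m + 'I_m); inr j]] = set0.
  by apply/setP => x; rewrite !inE.
have -> : [set x | inr x \in [set (inr i : 'I_m + 'I_m); inr j]] = [set i; j].
  by apply/setP => x; rewrite !inE.
by cbv zeta; rewrite disj0l andbT.
Qed.

Lemma bier_lr m (K : {set {set 'I_m}}) i j :
  ([set inl i; inr j] \in bier K) = [&& [set i] \in K, [set j] \in alex_dual K & i != j].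
Proof.
rewrite inE.
have -> : [set x | inl x \in [set (inl i : 'I_m + 'I_m); inr j]] = [set i].
  by apply/setP => x; rewrite !inE orbF.
have -> : [set x | inr x \in [set (inl i : 'I_m + 'I_m); inr j]] = [set j].
  by apply/setP => x; rewrite !inE.
cbv zeta; congr [&& _, _ & _].
apply/idP/idP => [/disjE H|ij]; first by have := H i; rewrite !inE eqxx /=.
by apply/disjE => x; rewrite !inE; apply/negP => /andP [/eqP -> /eqP E]; move/eqP: ij.
Qed.

Lemma ghost_struct k (K : {set {set 'I_k.+3}}) g :
  is_complex K -> [set g] \notin K -> colorable (bier K) k.+2 ->
  K = S1 g \/ exists2 a, a != g & K = S2 a g.
Proof.
move=> [/set0Pn [F0 F0K] HK] gK [c [Hc1 Hc2]].
have s0 : set0 \in K by apply: HK F0K (sub0set _).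
have avoid : forall F, F \in K -> g \notin F.
  by move=> F FK; apply/negP => gF; move/negP: gK; apply; apply: HK FK _; rewrite sub1set.
have subK : forall F J : {set 'I_k.+3}, F \in K -> J \subset F -> J \in K by move=> F J; apply: HK.
case Hc: (~: [set g] \in K).
  left; apply/setP => J; rewrite inS1; apply/idP/idP; first exact: avoid.
  by move=> gJ; apply: subK Hc _; rewrite subsetC sub1set inE.
right.
have notK : forall J : {set 'I_k.+3}, g \in J -> J \notin K by move=> J gJ; apply/negP => /avoid; rewrite gJ.
have vr_ : forall j, inr j \in verts (bier K).
  move=> j; rewrite vr s0 in_dual /=; case: (eqVneq j g) => [->|jg]; first by rewrite Hc.
  by apply: notK; rewrite !inE eq_sym.
have edge_rr : forall i j, i != g -> j != g -> [set inr i; inr j] \in bier K.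
  move=> i j ig jg; rewrite bier_rr s0 in_dual; apply: notK.
  by rewrite !inE negb_or !(eq_sym g) ig jg.
have inj : {in ~: [set g] &, injective (fun j => c (inr j))}.
  move=> i j; rewrite !inE => ig jg /= E; apply/eqP; apply/negPn/negP => ij.
  by move: (Hc2 _ _ (edge_rr i j ig jg) ij); rewrite E eqxx.
have surj := surj_col inj.
have cS : #|~: [set g]| = k.+2 by rewrite cardsC1 card_ord.
have lt : forall x, x \in ~: [set g] -> c (inr x) < k.+2 by move=> x _; apply: Hc1.
have [a ag Ea] := surj _ cS lt _ (Hc1 _ (vr_ g)).
rewrite !inE in ag.
have aK : ~: [set a; g] \in K.
  have := Hc2 (inr a) (inr g); rewrite bier_rr s0 in_dual /= Ea eqxx.
  by case: (~: [set a; g] \in K) => //; apply => //.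
have vK : forall i, [set i] \in K -> i != a.
  move=> i iK.
  have ig : i != g by apply: contraNneq gK => <-.
  have vli : inl i \in verts (bier K).
    by rewrite vl iK in_dual setC0; apply: notK; rewrite inE.
  have [j jg Ej] := surj _ cS lt _ (Hc1 _ vli).
  rewrite !inE in jg.
  have ji : j = i.
    apply/eqP; apply/negPn/negP => ji.
    have := Hc2 (inl i) (inr j); rewrite bier_lr iK in_dual eq_sym ji Ej eqxx /=.
    have gj : g \in [set~ j] by rewrite !inE eq_sym.
    by rewrite andbT => H; have := H (notK _ gj) isT.
  subst j.
  have := Hc2 (inl i) (inr g); rewrite bier_lr iK in_dual Hc ig -Ej -Ea /= => H.
  by apply: contra (H isT isT) => /eqP ->.
exists a => //; apply/setP => J; rewrite inS2; apply/idP/idP.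
  move=> JK; rewrite avoid // andbT; apply/negP => aJ.
  have aJ' : [set a] \subset J by rewrite sub1set.
  by have := vK a (subK _ _ JK aJ'); rewrite eqxx.
move=> H; apply: subK aK _.
by rewrite subsetC subUset !sub1set !inE.
Qed.

Definition Std k (K : {set {set 'I_k.+3}}) :=
  (exists a, K = S1 a) \/ (exists a b, a != b /\ (K = S2 a b \/ K = S3 a b)).

Lemma dual_complex m (K : {set {set 'I_m}}) :
  is_complex K -> K != simplex [set: 'I_m] -> is_complex (alex_dual K).
Proof.
move=> [_ HK] KT; split.
  have [F FK] : exists F, F \notin K.
    case: (pickP [pred F | F \notin K]) => [F /= H|H]; first by exists F.
    move/negP: KT; case; apply/eqP/setP => F; rewrite /simplex powersetE subsetT.
    by have := H F; rewrite /= => /negbFE ->.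
  by apply/set0Pn; exists (~: F); rewrite in_dual setCK.
move=> F G; rewrite !in_dual => FK GF; apply: contra FK => GK.
by apply: HK GK _; rewrite setCS.
Qed.

Lemma ghost_of k (K : {set {set 'I_k.+3}}) : f0 K < k.+3 -> exists g, [set g] \notin K.
Proof.
move=> H; case: (pickP [pred g | [set g] \notin K]) => [g /= Hg|Hn]; first by exists g.
suff : verts K = setT by move=> E; move: H; rewrite /f0 E cardsT card_ord ltnn.
apply/setP => g; rewrite in_verts inE; by have := Hn g; rewrite /= => /negbFE.
Qed.

Lemma chrom_std k (K : {set {set 'I_k.+3}}) :
  is_complex K -> K != simplex [set: 'I_k.+3] ->
  (f0 K < k.+3 \/ f0 (alex_dual K) < k.+3) -> colorable (bier K) k.+2 -> Std K.
Proof.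
move=> HK KT [H|H] Hc.
  have [g gK] := ghost_of H.
  case: (ghost_struct HK gK Hc) => [->|[a ag ->]].
    by left; exists g.
  by right; exists a, g; split => //; left.
have HK' := dual_complex HK KT.
have [g gK] := ghost_of H.
case: (ghost_struct HK' gK (colorable_dual Hc)) => [E|[a ag E]].
  by left; exists g; rewrite -[K]dual_dual E dual_S1.
by right; exists a, g; split => //; right; rewrite -[K]dual_dual E dual_S2.
Qed.

Lemma std_cross k (K : {set {set 'I_k.+3}}) : Std K ->
  exists (e : 'I_k.+3 + 'I_k.+3 -> 'I_k.+2 * bool) g, cross (bier K) e g.
Proof.
case=> [[a ->]|[a [b [ab [->|->]]]]].
- by exists (e1 a), (g1 a); apply: cross_S1.
- by exists (e2 a b), (g2 a b); apply: cross_S2.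
- by eexists; eexists; apply: cross_S3.
Qed.

Lemma std_chrom k (K : {set {set 'I_k.+3}}) : Std K -> chromatic_number (bier K) k.+2.
Proof. by case/std_cross => e [g /cross_chrom]; rewrite card_ord. Qed.

Lemma std_iso k (K : {set {set 'I_k.+3}}) : Std K -> sc_iso (bier K) (iter_susp_Z4 k).
Proof.
case/std_cross => e [g C1].
have [e' [g' /fullcross_cross C2]] := iter_cross k.
have E : #|'I_k.+2| = #|cidx k| by rewrite card_ord card_cidx.
have [h [hi [hK hiK]]] := card_bij E.
exact: cross_iso C1 C2 hK hiK.
Qed.

Lemma perm_imsetC m (s : {perm 'I_m}) (A : {set 'I_m}) : s @: (~: A) = ~: (s @: A).
Proof.
rewrite !(can2_imset_pre _ (permK s) (permKV s)).
by apply/setP => x; rewrite !inE.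
Qed.

Lemma relabel_simplex m (s : {perm 'I_m}) (A : {set 'I_m}) :
  relabel s (simplex A) = simplex (s @: A).
Proof.
apply/setP => G; rewrite /relabel /simplex powersetE; apply/imsetP/idP.
  by case=> F; rewrite powersetE => FA ->; apply: imsetS.
move=> GA; exists (s^-1%g @: G).
  rewrite powersetE; apply/subsetP => x /imsetP [y yG ->].
  by have /imsetP [z zA ->] := subsetP GA y yG; rewrite permK.
by rewrite -imset_comp (eq_imset _ (permKV s)) imset_id.
Qed.

Lemma relabel_S1 m (s : {perm 'I_m}) a : relabel s (S1 a) = S1 (s a).
Proof. by rewrite /S1 relabel_simplex perm_imsetC imset_set1. Qed.

Lemma relabel_S2 m (s : {perm 'I_m}) a b : relabel s (S2 a b) = S2 (s a) (s b).
Proof. by rewrite /S2 relabel_simplex perm_imsetC imsetU !imset_set1. Qed.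

Lemma relabel_S3 m (s : {perm 'I_m}) a b : relabel s (S3 a b) = S3 (s a) (s b).
Proof. by rewrite /S3 /relabel imsetU -!/(relabel s _) !relabel_S1. Qed.

Lemma relabelK m (s : {perm 'I_m}) K : relabel s^-1%g (relabel s K) = K.
Proof.
rewrite /relabel -imset_comp.
rewrite (eq_imset (g := id)) ?imset_id // => F /=.
by rewrite -imset_comp (eq_imset _ (permK s)) imset_id.
Qed.

Definition prevI k : 'I_k.+3 := inord k.+1.

Lemma prev_neq k : (ord_max : 'I_k.+3) != prevI k.
Proof. by rewrite -val_eqE /= inordK //; lia. Qed.

Lemma first_1 k : first k.+3 (k.+3 - 1) = ~: [set (ord_max : 'I_k.+3)].
Proof.
apply/setP => i; rewrite !inE -val_eqE /=; have := ltn_ord i.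
by move: (nat_of_ord i) => j Hj; apply/idP/idP => H; lia.
Qed.

Lemma first_2 k : first k.+3 (k.+3 - 2) = ~: [set (ord_max : 'I_k.+3); prevI k].
Proof.
apply/setP => i; rewrite !inE -!val_eqE /= inordK; last by lia.
have := ltn_ord i; move: (nat_of_ord i) => j Hj; apply/idP/idP => H; lia.
Qed.

Lemma first_3 k : first k.+3 (k.+3 - 2) :|: [set i : 'I_k.+3 | val i == k.+3 - 1] = ~: [set prevI k].
Proof.
apply/setP => i; rewrite !inE -!val_eqE /= inordK; last by lia.
have := ltn_ord i; move: (nat_of_ord i) => j Hj; apply/idP/idP => H; lia.
Qed.

Lemma perm2 m (a b x y : 'I_m) : a != b -> x != y ->
  exists s : {perm 'I_m}, s a = x /\ s b = y.
Proof.
move=> ab xy.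
exists (tperm a x * tperm (tperm a x b) y)%g; rewrite !permM tpermL tpermL; split => //.
have H : tperm a x b != tperm a x a by rewrite (inj_eq perm_inj) eq_sym.
by apply: tpermD; [rewrite tpermL in H | rewrite eq_sym].
Qed.

Lemma cases_std k (K : {set {set 'I_k.+3}}) :
  (exists s : {perm 'I_k.+3}, [\/ relabel s K = S1 ord_max, relabel s K = S2 ord_max (prevI k)
                                | relabel s K = S3 ord_max (prevI k)]) <-> Std K.
Proof.
have pn := prev_neq k.
split.
  case=> s [] E; move: (congr1 (relabel s^-1%g) E); rewrite relabelK => ->.
  - by left; exists (s^-1%g ord_max); rewrite relabel_S1.
  - right; exists (s^-1%g ord_max), (s^-1%g (prevI k)); split; last by left; rewrite relabel_S2.
    by rewrite (inj_eq (@perm_inj _ _)).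
  - right; exists (s^-1%g ord_max), (s^-1%g (prevI k)); split; last by right; rewrite relabel_S3.
    by rewrite (inj_eq (@perm_inj _ _)).
case=> [[a ->]|[a [b [ab E]]]].
  exists (tperm a ord_max); constructor 1; by rewrite relabel_S1 tpermL.
have [s [sa sb]] := perm2 ab pn.
exists s; case: E => ->.
  by constructor 2; rewrite relabel_S2 sa sb.
by constructor 3; rewrite relabel_S3 sa sb.
Qed.

Theorem mainTheorem7 (m : nat) (K : {set {set 'I_m}}) :
  3 <= m ->
  is_complex K ->
  K != simplex [set: 'I_m] ->
  (f0 K < m \/ f0 (alex_dual K) < m) ->
  let cases :=
    exists s : {perm 'I_m},
      let K' := relabel s K in
      [\/ K' = simplex (first m (m - 1)),
          K' = simplex (first m (m - 2)) |
          K' = simplex (first m (m - 1)) :|: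
               simplex (first m (m - 2) :|: [set i : 'I_m | val i == m - 1])] in
  (chromatic_number (bier K) (m - 1) <-> cases) /\
  (cases -> sc_iso (bier K) (iter_susp_Z4 (m - 3))).
Proof.
case: m K => [|[|[|k]]] K H3 HK KT Hf //.
cbv zeta; rewrite first_3 first_1 first_2.
have CS := cases_std K.
split; first split.
- by case=> Hc _; apply/CS; apply: chrom_std.
- by move/CS; apply: std_chrom.
- move/CS => HS; have E3 : k.+3 - 3 = k by lia.
  rewrite E3; exact: std_iso.
Qed.
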